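(* Let $k\ge1$, $IS\in\{\Box,\blacksquare\}^k$, and let $\tau$ be a correct compositional translation from $\mathrm{SYNCSIMPLE}$ into $\mathrm{LOCKSIMPLE}_{k,IS}$. Then there is a reduction sequence of $\tau(!)0\mid\tau(?)0$ starting from the store $IS$ that executes every symbol of $\tau(!)$ and of $\tau(?)$.
   Context: $\mathrm{SYNCSIMPLE}$: subprocesses $\mathcal{U} ::= \checkmark \mid 0 \mid\, !\mathcal{U} \mid\, ?\mathcal{U}$; processes are finite parallel compositions ($\mid$ associative, commutative, $0$ a unit). Reduction: $!\mathcal{U}_1\mid ?\mathcal{U}_2\mid \mathcal{P}\to \mathcal{U}_1\mid\mathcal{U}_2\mid\mathcal{P}$. Successful: of form $\checkmark\mid\mathcal{P}$; may-convergent: reduces to a successful process; must-convergent: every reachable process is may-convergent. $\mathrm{LOCKSIMPLE}_{k,IS}$ ($IS\in\{\Box,\blacksquare\}^k$, $\Box$ empty, $\blacksquare$ full): subprocesses are words over $\{P_1,T_1,\dots,P_k,T_k\}$ followed by $0$ or $\checkmark$; states $(\mathcal{P},C)$ reduce by $(P_i\mathcal{U}\mid\mathcal{P},C)\to(\mathcal{U}\mid\mathcal{P},C[C_i:=\blacksquare])$ only if $C_i=\Box$, and $(T_i\mathcal{U}\mid\mathcal{P},C)\to(\mathcal{U}\mid\mathcal{P},C[C_i:=\Box])$ always. Success = process contains $\checkmark$; a process $\mathcal{P}$ is may/must-convergent iff the state $(\mathcal{P},IS)$ is. A compositional translation $\tau$ is given by words $\tau(!),\tau(?)$ with $\tau(0)=0$,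 $\tau(\checkmark)=\checkmark$, $\tau(!\mathcal{U})=\tau(!)\tau(\mathcal{U})$, $\tau(?\mathcal{U})=\tau(?)\tau(\mathcal{U})$, $\tau$ commuting with $\mid$; correct = preserves and reflects may- and must-convergence. *)

(* Defs.v *)
From mathcomp Require Import all_boot.
From Stdlib Require Import Permutation.
Set Implicit Arguments. Unset Strict Implicit. Unset Printing Implicit Defensive.

Inductive star (S : Type) (R : S -> S -> Prop) : S -> S -> Prop :=
| star_refl x : star R x x
| star_step x y z : R x y -> star R y z -> star R x z.

Inductive sproc := SCheck | SZero | SSend of sproc | SRecv of sproc.

(* processes: finite parallel compositions, as lists (order irrelevant) *)
Definition sprocess := seq sproc.

Definition sync_step (P Q : sprocess) : Prop :=
  exists U1 U2 R, Permutation P (SSend U1 :: SRecv U2 :: R) /\ Q = U1 :: U2 :: R.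

Definition sync_success (P : sprocess) : Prop := List.In SCheck P.

Definition sync_may (P : sprocess) : Prop :=
  exists Q, star sync_step P Q /\ sync_success Q.

Definition sync_must (P : sprocess) : Prop :=
  forall Q, star sync_step P Q -> sync_may Q.

Inductive lact (k : nat) := LP of 'I_k | LT of 'I_k.

(* subprocess: a word of actions followed by 0 (false) or a check (true) *)
Definition lsub (k : nat) := (seq (lact k) * bool)%type.
Definition lprocess (k : nat) := seq (lsub k).
(* store: true = full (black square), false = empty (white square) *)
Definition lstore (k : nat) := {ffun 'I_k -> bool}.
Definition lstate (k : nat) := (lprocess k * lstore k)%type.

Definition setc (k : nat) (C : lstore k) (i : 'I_k) (b : bool) : lstore k :=
  [ffun j => if j == i then b else C j].

Inductive lock_step (k : nat) : lstate k -> lstate k -> Prop :=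
| lstep_P A B (i : 'I_k) w e (C : lstore k) :
    C i = false ->
    lock_step (A ++ (LP i :: w, e) :: B, C) (A ++ (w, e) :: B, setc C i true)
| lstep_T A B (i : 'I_k) w e (C : lstore k) :
    lock_step (A ++ (LT i :: w, e) :: B, C) (A ++ (w, e) :: B, setc C i false).

Definition lock_success (k : nat) (S : lstate k) : Prop :=
  List.In ([::], true) S.1.

Definition lock_may (k : nat) (S : lstate k) : Prop :=
  exists S', star (@lock_step k) S S' /\ lock_success S'.

Definition lock_must (k : nat) (S : lstate k) : Prop :=
  forall S', star (@lock_step k) S S' -> lock_may S'.

Fixpoint tr_sub (k : nat) (ts tr : seq (lact k)) (U : sproc) : lsub k :=
  match U with
  | SCheck => ([::], true)
  | SZero => ([::], false)
  | SSend U' => let p := tr_sub ts tr U' in (ts ++ p.1, p.2)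
  | SRecv U' => let p := tr_sub ts tr U' in (tr ++ p.1, p.2)
  end.

Definition tr_proc (k : nat) (ts tr : seq (lact k)) (P : sprocess) : lprocess k :=
  map (tr_sub ts tr) P.

(* tau given by tau(!) = ts, tau(?) = tr is correct w.r.t. initial store IS *)
Definition correct_translation (k : nat) (IS : lstore k) (ts tr : seq (lact k)) : Prop :=
  forall P : sprocess,
    (sync_may P <-> lock_may (tr_proc ts tr P, IS)) /\
    (sync_must P <-> lock_must (tr_proc ts tr P, IS)).

(* Main.v *)
Require Import Defs.
From mathcomp Require Import all_boot.
From Stdlib Require Import Permutation.

Lemma step2 (k : nat) a b e1 e2 (C : lstore k) S :
  lock_step ([:: (a,e1); (b,e2)], C) S ->
  exists a' b' C', S = ([:: (a',e1);(b',e2)],C') /\ (exists x, a = x ++ a') /\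
    forall f1 f2, lock_step ([::(a,f1);(b,f2)],C) ([::(a',f1);(b',f2)],C').
Proof.
move=> H; inversion H as [A B i w e C0 Hc E1 E2|A B i w e C0 E1 E2]; subst.
- destruct A as [|x [|y A]]; simpl in *; inversion E1; subst.
  + exists w, b, (setc C i true); split; first by [].
    split; first by exists [:: LP i].
    move=> f1 f2; exact (@lstep_P k [::] [:: (b,f2)] i w f1 C Hc).
  + exists a, w, (setc C i true); split; first by [].
    split; first by exists [::].
    move=> f1 f2; exact (@lstep_P k [:: (a,f1)] [::] i w f2 C Hc).
  + destruct A; discriminate.
- destruct A as [|x [|y A]]; simpl in *; inversion E1; subst.
  + exists w, b, (setc C i false); split; first by [].
    split; first by exists [:: LT i].
    move=> f1 f2; exact (@lstep_T k [::] [:: (b,f2)] i w f1 C).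
  + exists a, w, (setc C i false); split; first by [].
    split; first by exists [::].
    move=> f1 f2; exact (@lstep_T k [:: (a,f1)] [::] i w f2 C).
  + destruct A; discriminate.
Qed.

Lemma star2 (k : nat) a b e1 e2 (C : lstore k) S :
  star (@lock_step k) ([:: (a,e1); (b,e2)], C) S ->
  exists a' b' C', S = ([:: (a',e1);(b',e2)],C') /\ (exists x, a = x ++ a') /\
    forall f1 f2, star (@lock_step k) ([::(a,f1);(b,f2)],C) ([::(a',f1);(b',f2)],C').
Proof.
move E: ([:: (a,e1); (b,e2)], C) => S0 H.
elim: H a b C E => [x|x y z Hxy Hyz IH] a b C E; subst.
- exists a, b, C; split=> //; split; first by exists [::].
  move=> f1 f2; exact: star_refl.
- have [a1 [b1 [C1 [Ey [[x1 Ex1] Hs]]]]] := @step2 _ _ _ _ _ _ _ Hxy.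
  have [a2 [b2 [C2 [Ez [[x2 Ex2] Hs2]]]]] := IH a1 b1 C1 (esym Ey).
  exists a2, b2, C2; split=> //; split; first by exists (x1 ++ x2); rewrite Ex1 Ex2 catA.
  move=> f1 f2; exact: star_step (Hs f1 f2) (Hs2 f1 f2).
Qed.

Lemma star_trans (k : nat) x y z :
  star (@lock_step k) x y -> star (@lock_step k) y z -> star (@lock_step k) x z.
Proof.
elim=> // x0 y0 z0 H _ IH Hz; exact: star_step H (IH Hz).
Qed.

Theorem lemma4p1 (k : nat) (IS : lstore k) (ts tr : seq (lact k)) :
  (0 < k)%N ->
  correct_translation IS ts tr ->
  exists C : lstore k,
    star (@lock_step k)
      ([:: (ts, false); (tr, false)], IS)
      ([:: ([::], false); ([::], false)], C).
Proof.
move=> _ Hc.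
have Hmay1 : sync_may [:: SSend SCheck; SRecv SZero].
  exists [:: SCheck; SZero]; split; last by left.
  apply: star_step (star_refl _ _).
  by exists SCheck, SZero, [::]; split.
have Hmust2 : sync_must [:: SSend SZero; SRecv SCheck].
  move=> Q HQ.
  have step_inv : forall R, sync_step [:: SSend SZero; SRecv SCheck] R -> R = [:: SZero; SCheck].
    move=> R [U1 [U2 [R0 [Hp ->]]]].
    have := Permutation_in (SSend U1) (Permutation_sym Hp) (or_introl erefl).
    have := Permutation_in (SRecv U2) (Permutation_sym Hp) (or_intror (or_introl erefl)).
    move=> [//|[[<-]|//]] [[<-]|[//|//]].
    have := Permutation_length Hp; case: R0 Hp => //= [Hp _].
  have stuck : forall R, ~ sync_step [:: SZero; SCheck] R.
    move=> R [U1 [U2 [R0 [Hp _]]]].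
    have := Permutation_in (SSend U1) (Permutation_sym Hp) (or_introl erefl).
    by move=> [|[|]].
  inversion HQ as [|x y z Hxy Hyz]; subst.
  - exists [:: SZero; SCheck]; split; last by right; left.
    apply: star_step (star_refl _ _).
    by exists SZero, SCheck, [::]; split.
  - rewrite (step_inv _ Hxy) in Hyz.
    inversion Hyz as [|x0 y0 z0 H0]; subst; last by case: (stuck _ H0).
    exists [:: SZero; SCheck]; split; [exact: star_refl | by right; left].
have [[H1 _] _] := Hc [:: SSend SCheck; SRecv SZero].
have [_ [H2 _]] := Hc [:: SSend SZero; SRecv SCheck].
have [S1 [HS1 Hsucc1]] := H1 Hmay1.
rewrite /tr_proc /= !cats0 in HS1.
have [a1 [b1 [C1 [ES1 [_ Hr1]]]]] := @star2 _ _ _ _ _ _ _ HS1.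
subst S1.
have Ha1 : a1 = [::].
  move: Hsucc1; rewrite /lock_success /= => [[[->]|[]]] //.
subst a1.
have Hm := H2 Hmust2.
rewrite /tr_proc /= !cats0 in Hm.
have [S2 [HS2 Hsucc2]] := Hm _ (Hr1 false true).
have [a2 [b2 [C2 [ES2 [[x2 Ex2] Hr2]]]]] := @star2 _ _ _ _ _ _ _ HS2.
subst S2.
have Ha2 : a2 = [::] by case: x2 Ex2 => // -[].
subst a2.
have Hb2 : b2 = [::].
  move: Hsucc2; rewrite /lock_success /= => [[[]|[[->]|[]]]] //.
subst b2.
exists C2.
exact: star_trans (Hr1 false false) (Hr2 false false).
Qed.
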